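(* Fix a half-integer $j\ge \tfrac12$ and a real number $l\in(0,1)$, and let $W_{j,l}$ be the effective Bianchi IX potential defined in the context, viewed as a function of $(q^0,q^+,q^-)$. Let $q^0_1\in\mathbb{R}$ and let $(q^+(q^0),q^-(q^0),\pi_+(q^0),\pi_-(q^0))$ be a solution, defined for all $q^0\le q^0_1$, of the internal-time equations of motion \[ \frac{dq^\pm}{dq^0}=\frac{\pi_\pm}{2\sqrt{h}},\qquad \frac{d\pi_\pm}{dq^0}=-\frac{1}{\sqrt{h}}\frac{\partial W_{j,l}}{\partial q^\pm},\qquad h:=\tfrac12(\pi_+^2+\pi_-^2)+2W_{j,l}(q^0,q^+,q^-), \] with $h>0$ along the solution. Then $R(q^0):=\sqrt{(q^+(q^0))^2+(q^-(q^0))^2}$ does not remain bounded as $q^0\to-\infty$; i.e., there is no $q^0_2\le q^0_1$ such that $R$ is bounded on $(-\infty,q^0_2]$.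
   Context: Effective potential. For $0<l<1$ define, for $q>0$, \[ F_l(q)=\Big(\tfrac{2l(l+1)(l+2)}{3}\Big)^{\frac{1}{l-1}}\Big[(l+1)\{(q+1)^{l+2}-|q-1|^{l+2}\}-(l+2)\,q\,\{(q+1)^{l+1}-\mathrm{sgn}(q-1)|q-1|^{l+1}\}\Big]^{\frac{1}{1-l}} . \] (It satisfies $F_l(q)\to q^{-1}$ behaviour for $q\gg1$ and $F_l(q)\approx (3q/(l+1))^{1/(1-l)}$ for $0<q\ll1$.) For $\mu=(\mu_1,\mu_2,\mu_3)$ with all $\mu_I>0$ define, for $\{I,J,K\}=\{1,2,3\}$, \[ \Gamma_I=\tfrac12\big(\mu_K F_l(\mu_J)+\mu_J F_l(\mu_K)-\mu_J\mu_K F_l(\mu_I)^2\big), \] and \[ W_{j,l}(\mu)=8j^2\big[\mu_1\mu_2(\Gamma_1\Gamma_2-\Gamma_3)+\mu_2\mu_3(\Gamma_2\Gamma_3-\Gamma_1)+\mu_3\mu_1(\Gamma_3\Gamma_1-\Gamma_2)\big]. \] Variables: with $Q:=e^{\frac{2}{\sqrt3}q^0}/(2j)$ (so $q^0=\tfrac1{\sqrt3}\ln(\text{volume})$ is the internal time, decreasing volume means $q^0$ decreasing), \[ \mu_1=Q\,e^{\frac{4}{\sqrt6}q^+},\quad \mu_2=Q\,e^{-\frac{2}{\sqrt6}q^++\sqrt2\,q^-},\quad \mu_3=Q\,e^{-\frac{2}{\sqrt6}q^+-\sqrt2\,q^-}, \] and $W_{j,l}(q^0,q^+,q^-)$ denotes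 $W_{j,l}$ evaluated at these $\mu_I$. The internal-time Hamiltonian is $\mathcal H=\sqrt h$, with $(q^\pm,\pi_\pm)$ canonically conjugate. *)

(* Defs.v *)
From Stdlib Require Import Reals.
From Coquelicot Require Import Coquelicot.
Open Scope R_scope.

(* real power x^a for a > 0, with the convention 0^a = 0 (and x^a = 0 for x <= 0,
   only ever used with x >= 0 here) *)
Definition rpow (x a : R) : R := if Rlt_dec 0 x then Rpower x a else 0.

Definition sgn (x : R) : R :=
  if Rlt_dec 0 x then 1 else if Rlt_dec x 0 then -1 else 0.

Definition F (l q : R) : R :=
  rpow (2 * l * (l + 1) * (l + 2) / 3) (1 / (l - 1)) *
  rpow ((l + 1) * (rpow (q + 1) (l + 2) - rpow (Rabs (q - 1)) (l + 2))
        - (l + 2) * q * (rpow (q + 1) (l + 1) - sgn (q - 1) * rpow (Rabs (q - 1)) (l + 1)))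
       (1 / (1 - l)).

(* Gamma_I with {I,J,K} : Gamma l mI mJ mK *)
Definition Gam (l mI mJ mK : R) : R :=
  / 2 * (mK * F l mJ + mJ * F l mK - mJ * mK * (F l mI) ^ 2).

Definition Wmu (j l m1 m2 m3 : R) : R :=
  let G1 := Gam l m1 m2 m3 in
  let G2 := Gam l m2 m3 m1 in
  let G3 := Gam l m3 m1 m2 in
  8 * j ^ 2 * (m1 * m2 * (G1 * G2 - G3) + m2 * m3 * (G2 * G3 - G1)
               + m3 * m1 * (G3 * G1 - G2)).

Definition W (j l q0 qp qm : R) : R :=
  let Q := exp (2 / sqrt 3 * q0) / (2 * j) in
  Wmu j l (Q * exp (4 / sqrt 6 * qp))
          (Q * exp (- (2 / sqrt 6) * qp + sqrt 2 * qm))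
          (Q * exp (- (2 / sqrt 6) * qp - sqrt 2 * qm)).

(* Main.v *)
Require Import Defs.
From Stdlib Require Import Reals.
From Coquelicot Require Import Coquelicot.
Open Scope R_scope.
From Stdlib Require Import Lra Psatz.

Definition gam (e yI yJ yK zI zJ zK : R) : R :=
  /2 * (yK * zJ + yJ * zK) - e * (/2 * yJ * yK * zI ^ 2).
Definition dgam (e yI yJ yK zI zJ zK dyI dyJ dyK dzI dzJ dzK : R) : R :=
  /2 * (dyK * zJ + yK * dzJ + dyJ * zK + yJ * dzK)
  - e * (/2 * (dyJ * yK * zI ^ 2 + yJ * dyK * zI ^ 2 + yJ * yK * (2 * zI * dzI))).

Definition Ps (e y1 y2 y3 z1 z2 z3 : R) : R :=
  let G1 := gam e y1 y2 y3 z1 z2 z3 in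
  let G2 := gam e y2 y3 y1 z2 z3 z1 in
  let G3 := gam e y3 y1 y2 z3 z1 z2 in
  y1 * y2 * (e * (G1 * G2) - G3) + y2 * y3 * (e * (G2 * G3) - G1)
  + y3 * y1 * (e * (G3 * G1) - G2).

Definition Psd (e y1 y2 y3 z1 z2 z3 dy1 dy2 dy3 dz1 dz2 dz3 : R) : R :=
  let G1 := gam e y1 y2 y3 z1 z2 z3 in
  let G2 := gam e y2 y3 y1 z2 z3 z1 in
  let G3 := gam e y3 y1 y2 z3 z1 z2 in
  let D1 := dgam e y1 y2 y3 z1 z2 z3 dy1 dy2 dy3 dz1 dz2 dz3 in
  let D2 := dgam e y2 y3 y1 z2 z3 z1 dy2 dy3 dy1 dz2 dz3 dz1 in
  let D3 := dgam e y3 y1 y2 z3 z1 z2 dy3 dy1 dy2 dz3 dz1 dz2 in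
  (dy1 * y2 + y1 * dy2) * (e * (G1 * G2) - G3) + y1 * y2 * (e * (D1 * G2 + G1 * D2) - D3)
  + (dy2 * y3 + y2 * dy3) * (e * (G2 * G3) - G1) + y2 * y3 * (e * (D2 * G3 + G2 * D3) - D1)
  + (dy3 * y1 + y3 * dy1) * (e * (G3 * G1) - G2) + y3 * y1 * (e * (D3 * G1 + G3 * D1) - D2).

Definition Al (y1 y2 y3 z1 z2 z3 : R) : R :=
  y1 * y2 * (/2 * (y2 * z1 + y1 * z2)) + y2 * y3 * (/2 * (y3 * z2 + y2 * z3))
  + y3 * y1 * (/2 * (y1 * z3 + y3 * z1)).

Definition Bs (e y1 y2 y3 z1 z2 z3 : R) : R :=
  let G1 := gam e y1 y2 y3 z1 z2 z3 in
  let G2 := gam e y2 y3 y1 z2 z3 z1 in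
  let G3 := gam e y3 y1 y2 z3 z1 z2 in
  y1 * y2 * (G1 * G2 + /2 * y1 * y2 * z3 ^ 2) + y2 * y3 * (G2 * G3 + /2 * y2 * y3 * z1 ^ 2)
  + y3 * y1 * (G3 * G1 + /2 * y3 * y1 * z2 ^ 2).

Lemma Ps_split e y1 y2 y3 z1 z2 z3 :
  Ps e y1 y2 y3 z1 z2 z3 = - Al y1 y2 y3 z1 z2 z3 + e * Bs e y1 y2 y3 z1 z2 z3.
Proof. unfold Ps, Al, Bs, gam. ring. Qed.

Definition dAl (y1 y2 y3 z1 z2 z3 dy1 dy2 dy3 dz1 dz2 dz3 : R) : R :=
  (dy1 * y2 + y1 * dy2) * (/2 * (y2 * z1 + y1 * z2))
  + y1 * y2 * (/2 * (dy2 * z1 + y2 * dz1 + dy1 * z2 + y1 * dz2))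
  + (dy2 * y3 + y2 * dy3) * (/2 * (y3 * z2 + y2 * z3))
  + y2 * y3 * (/2 * (dy3 * z2 + y3 * dz2 + dy2 * z3 + y2 * dz3))
  + (dy3 * y1 + y3 * dy1) * (/2 * (y1 * z3 + y3 * z1))
  + y3 * y1 * (/2 * (dy1 * z3 + y1 * dz3 + dy3 * z1 + y3 * dz1)).

Definition dBs (e y1 y2 y3 z1 z2 z3 dy1 dy2 dy3 dz1 dz2 dz3 : R) : R :=
  let G1 := gam e y1 y2 y3 z1 z2 z3 in
  let G2 := gam e y2 y3 y1 z2 z3 z1 in
  let G3 := gam e y3 y1 y2 z3 z1 z2 in
  let D1 := dgam e y1 y2 y3 z1 z2 z3 dy1 dy2 dy3 dz1 dz2 dz3 in
  let D2 := dgam e y2 y3 y1 z2 z3 z1 dy2 dy3 dy1 dz2 dz3 dz1 in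
  let D3 := dgam e y3 y1 y2 z3 z1 z2 dy3 dy1 dy2 dz3 dz1 dz2 in
  (dy1 * y2 + y1 * dy2) * (G1 * G2 + /2 * y1 * y2 * z3 ^ 2)
  + y1 * y2 * (D1 * G2 + G1 * D2 + /2 * ((dy1 * y2 + y1 * dy2) * z3 ^ 2 + y1 * y2 * (2 * z3 * dz3)))
  + (dy2 * y3 + y2 * dy3) * (G2 * G3 + /2 * y2 * y3 * z1 ^ 2)
  + y2 * y3 * (D2 * G3 + G2 * D3 + /2 * ((dy2 * y3 + y2 * dy3) * z1 ^ 2 + y2 * y3 * (2 * z1 * dz1)))
  + (dy3 * y1 + y3 * dy1) * (G3 * G1 + /2 * y3 * y1 * z2 ^ 2)
  + y3 * y1 * (D3 * G1 + G3 * D1 + /2 * ((dy3 * y1 + y3 * dy1) * z2 ^ 2 + y3 * y1 * (2 * z2 * dz2))).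

Lemma Psd_split e y1 y2 y3 z1 z2 z3 dy1 dy2 dy3 dz1 dz2 dz3 :
  Psd e y1 y2 y3 z1 z2 z3 dy1 dy2 dy3 dz1 dz2 dz3 =
  - dAl y1 y2 y3 z1 z2 z3 dy1 dy2 dy3 dz1 dz2 dz3 + e * dBs e y1 y2 y3 z1 z2 z3 dy1 dy2 dy3 dz1 dz2 dz3.
Proof. unfold Psd, dAl, dBs, dgam, gam. ring. Qed.

Lemma Ps_scale Q f y1 y2 y3 z1 z2 z3 :
  Ps 1 (Q*y1) (Q*y2) (Q*y3) (f*z1) (f*z2) (f*z3) = Q^3 * f * Ps (Q*f) y1 y2 y3 z1 z2 z3.
Proof. unfold Ps, gam. ring. Qed.

Lemma Psd_scale Q f y1 y2 y3 z1 z2 z3 dy1 dy2 dy3 dz1 dz2 dz3 :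
  Psd 1 (Q*y1) (Q*y2) (Q*y3) (f*z1) (f*z2) (f*z3) (Q*dy1) (Q*dy2) (Q*dy3) (f*dz1) (f*dz2) (f*dz3)
  = Q^3 * f * Psd (Q*f) y1 y2 y3 z1 z2 z3 dy1 dy2 dy3 dz1 dz2 dz3.
Proof. unfold Psd, dgam, gam. ring. Qed.

Lemma bp a b A B : Rabs a <= A -> Rabs b <= B -> Rabs (a + b) <= A + B.
Proof. intros; eapply Rle_trans; [apply Rabs_triang|lra]. Qed.
Lemma bm a b A B : Rabs a <= A -> Rabs b <= B -> Rabs (a - b) <= A + B.
Proof. intros; eapply Rle_trans; [apply Rabs_triang|]. rewrite Rabs_Ropp; lra. Qed.
Lemma bo a A : Rabs a <= A -> Rabs (- a) <= A.
Proof. rewrite Rabs_Ropp; auto. Qed.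
Lemma bmul a b A B : Rabs a <= A -> Rabs b <= B -> Rabs (a * b) <= A * B.
Proof. intros; rewrite Rabs_mult. apply Rmult_le_compat; auto; apply Rabs_pos. Qed.
Lemma bpow a A n : Rabs a <= A -> Rabs (a ^ n) <= A ^ n.
Proof. intros; rewrite <- RPow_abs. apply pow_incr; split; auto; apply Rabs_pos. Qed.
Lemma bc a : Rabs a <= Rabs a.
Proof. apply Rle_refl. Qed.

Ltac bnd :=
  first
  [ eassumption
  | eapply bp; [bnd|bnd]
  | eapply bm; [bnd|bnd]
  | eapply bo; bnd
  | eapply bmul; [bnd|bnd]
  | eapply bpow; bnd
  | apply bc ].

Lemma Bs_bound K k : exists B0, forall e y1 y2 y3 z1 z2 z3,
  Rabs e <= 1 -> Rabs y1 <= K -> Rabs y2 <= K -> Rabs y3 <= K ->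
  Rabs z1 <= k -> Rabs z2 <= k -> Rabs z3 <= k ->
  Rabs (Bs e y1 y2 y3 z1 z2 z3) <= B0.
Proof.
  eexists. intros. unfold Bs, gam. bnd.
Qed.

Lemma dBs_bound K k Ky Kz : exists B0, forall e y1 y2 y3 z1 z2 z3 dy1 dy2 dy3 dz1 dz2 dz3,
  Rabs e <= 1 -> Rabs y1 <= K -> Rabs y2 <= K -> Rabs y3 <= K ->
  Rabs z1 <= k -> Rabs z2 <= k -> Rabs z3 <= k ->
  Rabs dy1 <= Ky -> Rabs dy2 <= Ky -> Rabs dy3 <= Ky ->
  Rabs dz1 <= Kz -> Rabs dz2 <= Kz -> Rabs dz3 <= Kz ->
  Rabs (dBs e y1 y2 y3 z1 z2 z3 dy1 dy2 dy3 dz1 dz2 dz3) <= B0.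
Proof.
  eexists. intros. unfold dBs, dgam, gam. bnd.
Qed.

Lemma Psd_bound K k Ky Kz : exists B0, forall e y1 y2 y3 z1 z2 z3 dy1 dy2 dy3 dz1 dz2 dz3,
  Rabs e <= 1 -> Rabs y1 <= K -> Rabs y2 <= K -> Rabs y3 <= K ->
  Rabs z1 <= k -> Rabs z2 <= k -> Rabs z3 <= k ->
  Rabs dy1 <= Ky -> Rabs dy2 <= Ky -> Rabs dy3 <= Ky ->
  Rabs dz1 <= Kz -> Rabs dz2 <= Kz -> Rabs dz3 <= Kz ->
  Rabs (Psd e y1 y2 y3 z1 z2 z3 dy1 dy2 dy3 dz1 dz2 dz3) <= B0.
Proof.
  eexists. intros. unfold Psd, dgam, gam. bnd.
Qed.

Ltac pos := repeat (first [ apply Rmult_le_pos | apply Rplus_le_le_0_compat | assumption | lra ]).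

Lemma term_lb K a b c z : 0 < K -> /K <= a -> /K <= b -> /K <= c -> 1 <= z ->
  / K ^ 3 <= a * b * c * z.
Proof.
  intros HK Ha Hb Hc Hz.
  assert (0 < /K) by (apply Rinv_0_lt_compat; auto).
  replace (/ K ^ 3) with (/K * /K * /K * 1) by (field; lra).
  repeat apply Rmult_le_compat; try lra; pos.
Qed.

Lemma Al_lb K y1 y2 y3 z1 z2 z3 : 0 < K ->
  /K <= y1 -> /K <= y2 -> /K <= y3 -> 1 <= z1 -> 1 <= z2 -> 1 <= z3 ->
  3 / K ^ 3 <= Al y1 y2 y3 z1 z2 z3.
Proof.
  intros. unfold Al.
  pose proof (term_lb K y1 y2 y2 z1). pose proof (term_lb K y1 y2 y1 z2).
  pose proof (term_lb K y2 y3 y3 z2). pose proof (term_lb K y2 y3 y2 z3).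
  pose proof (term_lb K y3 y1 y1 z3). pose proof (term_lb K y3 y1 y3 z1).
  unfold Rdiv. nra.
Qed.

Lemma dAl_euler y1 y2 y3 z1 z2 z3 v1 v2 v3 :
  0 <= y1 -> 0 <= y2 -> 0 <= y3 -> 0 <= v1 -> 0 <= v2 -> 0 <= v3 ->
  3 * Al y1 y2 y3 z1 z2 z3 <= dAl y1 y2 y3 z1 z2 z3 y1 y2 y3 v1 v2 v3.
Proof.
  intros. assert (dAl y1 y2 y3 z1 z2 z3 y1 y2 y3 v1 v2 v3 - 3 * Al y1 y2 y3 z1 z2 z3
   = /2 * (y1*y2*(y2*v1 + y1*v2) + y2*y3*(y3*v2+y2*v3) + y3*y1*(y1*v3+y3*v1))).
  { unfold dAl, Al. field. }
  assert (0 <= /2 * (y1*y2*(y2*v1 + y1*v2) + y2*y3*(y3*v2+y2*v3) + y3*y1*(y1*v3+y3*v1))) by pos.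
  lra.
Qed.

Lemma scaled_main K k rho : 1 <= K -> 1 <= k -> 0 <= rho ->
  exists eps0 D0, 0 < eps0 <= 1 /\
  forall e y1 y2 y3 z1 z2 z3 v1 v2 v3, 0 < e <= eps0 ->
  /K <= y1 <= K -> /K <= y2 <= K -> /K <= y3 <= K ->
  1 <= z1 <= k -> 1 <= z2 <= k -> 1 <= z3 <= k ->
  0 <= v1 <= rho -> 0 <= v2 <= rho -> 0 <= v3 <= rho ->
  Ps e y1 y2 y3 z1 z2 z3 < 0 /\
  Psd e y1 y2 y3 z1 z2 z3 y1 y2 y3 v1 v2 v3 <= 0 /\
  (forall dy1 dy2 dy3 dz1 dz2 dz3,
    Rabs dy1 <= 2 * K -> Rabs dy2 <= 2 * K -> Rabs dy3 <= 2 * K ->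
    Rabs dz1 <= 2 * rho -> Rabs dz2 <= 2 * rho -> Rabs dz3 <= 2 * rho ->
    Rabs (Psd e y1 y2 y3 z1 z2 z3 dy1 dy2 dy3 dz1 dz2 dz3) <= D0).
Proof.
  intros HK Hk Hr.
  destruct (Bs_bound K k) as [B1 HB1].
  destruct (dBs_bound K k K rho) as [B2 HB2].
  destruct (Psd_bound K k (2*K) (2*rho)) as [D0 HD0].
  assert (HA0 : 0 < 3 / K ^ 3).
  { apply Rdiv_lt_0_compat; [lra| apply pow_lt; lra]. }
  set (B := Rabs B1 + Rabs B2 + 1).
  assert (HB : 0 < B) by (unfold B; pose proof (Rabs_pos B1); pose proof (Rabs_pos B2); lra).
  exists (Rmin 1 (3 / K ^ 3 / (2 * B))), D0. split.
  { split. apply Rmin_glb_lt; [lra|]. apply Rdiv_lt_0_compat; lra. apply Rmin_l. }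
  intros e y1 y2 y3 z1 z2 z3 v1 v2 v3 He Hy1 Hy2 Hy3 Hz1 Hz2 Hz3 Hv1 Hv2 Hv3.
  assert (HKp : 0 < K) by lra.
  assert (HKi0 : 0 < /K) by (apply Rinv_0_lt_compat; lra).
  assert (HKi : /K <= 1) by (rewrite <- Rinv_1; apply Rinv_le_contravar; lra).
  assert (Re : Rabs e <= 1) by (rewrite Rabs_pos_eq; [|lra]; pose proof (Rmin_l 1 (3 / K ^ 3 / (2 * B))); lra).
  assert (Hab : forall x a b, 0 <= a -> a <= x <= b -> Rabs x <= b).
  { intros. rewrite Rabs_pos_eq; lra. }
  assert (Ry1 : Rabs y1 <= K) by (apply (Hab _ (/K)); lra).
  assert (Ry2 : Rabs y2 <= K) by (apply (Hab _ (/K)); lra).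
  assert (Ry3 : Rabs y3 <= K) by (apply (Hab _ (/K)); lra).
  assert (Rz1 : Rabs z1 <= k) by (apply (Hab _ 1); lra).
  assert (Rz2 : Rabs z2 <= k) by (apply (Hab _ 1); lra).
  assert (Rz3 : Rabs z3 <= k) by (apply (Hab _ 1); lra).
  assert (Rv1 : Rabs v1 <= rho) by (apply (Hab _ 0); lra).
  assert (Rv2 : Rabs v2 <= rho) by (apply (Hab _ 0); lra).
  assert (Rv3 : Rabs v3 <= rho) by (apply (Hab _ 0); lra).
  pose proof (Al_lb K y1 y2 y3 z1 z2 z3 HKp ltac:(lra) ltac:(lra) ltac:(lra) ltac:(lra) ltac:(lra) ltac:(lra)) as HAl.
  assert (Heb : e * B <= 3 / K ^ 3 / 2).
  { assert (e <= 3 / K ^ 3 / (2 * B)) by (pose proof (Rmin_r 1 (3 / K ^ 3 / (2 * B))); lra).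
    apply Rmult_le_compat_r with (r := B) in H; [|lra].
    replace (3 / K ^ 3 / (2 * B) * B) with (3 / K ^ 3 / 2) in H by (field; lra). lra. }
  split; [|split].
  - rewrite Ps_split.
    pose proof (HB1 e y1 y2 y3 z1 z2 z3 Re Ry1 Ry2 Ry3 Rz1 Rz2 Rz3) as Hb.
    assert (e * Bs e y1 y2 y3 z1 z2 z3 <= e * B).
    { apply Rmult_le_compat_l; [lra|]. pose proof (Rle_abs (Bs e y1 y2 y3 z1 z2 z3)).
      pose proof (Rle_abs B1). pose proof (Rabs_pos B2). unfold B. lra. }
    lra.
  - rewrite Psd_split.
    pose proof (HB2 e y1 y2 y3 z1 z2 z3 y1 y2 y3 v1 v2 v3 Re Ry1 Ry2 Ry3 Rz1 Rz2 Rz3 Ry1 Ry2 Ry3 Rv1 Rv2 Rv3) as Hb.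
    pose proof (dAl_euler y1 y2 y3 z1 z2 z3 v1 v2 v3 ltac:(lra) ltac:(lra) ltac:(lra) ltac:(lra) ltac:(lra) ltac:(lra)).
    assert (e * dBs e y1 y2 y3 z1 z2 z3 y1 y2 y3 v1 v2 v3 <= e * B).
    { apply Rmult_le_compat_l; [lra|]. pose proof (Rle_abs (dBs e y1 y2 y3 z1 z2 z3 y1 y2 y3 v1 v2 v3)).
      pose proof (Rle_abs B2). pose proof (Rabs_pos B1). unfold B. lra. }
    lra.
  - intros. apply HD0; auto.
Qed.

Lemma mvt_bounds f df a b lo hi : a <= b ->
  (forall x, a <= x <= b -> is_derive f x (df x)) ->
  (forall x, a <= x <= b -> lo <= df x <= hi) ->
  lo * (b - a) <= f b - f a <= hi * (b - a).
Proof.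
  intros Hab Hd Hb.
  destruct (MVT_gen f a b df) as [c [Hc Heq]].
  - intros x Hx. apply Hd. rewrite Rmin_left in Hx by lra. rewrite Rmax_right in Hx by lra. lra.
  - intros x Hx. rewrite Rmin_left in Hx by lra. rewrite Rmax_right in Hx by lra.
    apply derivable_continuous_pt. exists (df x). apply is_derive_Reals. apply Hd; lra.
  - rewrite Rmin_left in Hc by lra. rewrite Rmax_right in Hc by lra.
    rewrite Heq. destruct (Hb c Hc). split; apply Rmult_le_compat_r; lra.
Qed.

Lemma mono_dec f df a b : a <= b ->
  (forall x, a <= x <= b -> is_derive f x (df x)) ->
  (forall x, a <= x <= b -> df x <= 0) -> f b <= f a.
Proof.
  intros Hab Hd Hn.
  destruct (MVT_gen f a b df) as [c [Hc Heq]].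
  - intros x Hx. apply Hd. rewrite Rmin_left in Hx by lra. rewrite Rmax_right in Hx by lra. lra.
  - intros x Hx. rewrite Rmin_left in Hx by lra. rewrite Rmax_right in Hx by lra.
    apply derivable_continuous_pt. exists (df x). apply is_derive_Reals. apply Hd; lra.
  - rewrite Rmin_left in Hc by lra. rewrite Rmax_right in Hc by lra.
    assert (df c * (b - a) <= 0). { apply Rmult_le_0_r; [apply Hn; auto| lra]. }
    lra.
Qed.

Lemma is_derive_Rpow a u : 0 < u -> is_derive (fun t => Rpower t a) u (a * Rpower u (a - 1)).
Proof. intros. apply is_derive_Reals. apply derivable_pt_lim_power. auto. Qed.

Lemma Rpower_1base a : Rpower 1 a = 1.
Proof. unfold Rpower. rewrite ln_1, Rmult_0_r. apply exp_0. Qed.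

Lemma Rpower_pos x a : 0 < Rpower x a.
Proof. unfold Rpower. apply exp_pos. Qed.

Lemma Rpower_ge1 x a : 1 <= x -> 0 <= a -> 1 <= Rpower x a.
Proof. intros. rewrite <- (Rpower_1base a). apply Rle_Rpower_l; lra. Qed.

Lemma Rpower_le1 x a : 0 < x <= 1 -> 0 <= a -> Rpower x a <= 1.
Proof. intros. rewrite <- (Rpower_1base a). apply Rle_Rpower_l; lra. Qed.

Lemma Rpower_le_sq x a : 1 <= x -> a <= 2 -> Rpower x a <= x ^ 2.
Proof.
  intros. rewrite <- Rpower_pow by lra. apply Rle_Rpower; auto; try (simpl; lra).
Qed.

Lemma Rpower_le_id x a : 1 <= x -> a <= 1 -> Rpower x a <= x.
Proof.
  intros. rewrite <- (Rpower_1 x) at 2 by lra. apply Rle_Rpower; auto.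
Qed.

Section Fsec.
Variable l : R.
Hypothesis Hl : 0 < l < 1.

Definition gn (x : R) : R :=
  (l + 1) * (Rpower (x + 1) (l + 2) - Rpower (1 - x) (l + 2))
  - (l + 2) * x * (Rpower (x + 1) (l + 1) + Rpower (1 - x) (l + 1)).
Definition gd (x : R) : R :=
  (l + 2) * l * (Rpower (x + 1) (l + 1) + Rpower (1 - x) (l + 1))
  - (l + 2) * (l + 1) * x * (Rpower (x + 1) l - Rpower (1 - x) l).
Definition rr : R := 1 / (1 - l).
Definition c0 : R := Rpower (2 * l * (l + 1) * (l + 2) / 3) (1 / (l - 1)).
Definition Fd (x : R) : R := c0 * (rr * Rpower (gn x) (rr - 1) * gd x).
Definition d0 : R := l / (4 * (l + 1)).
Definition cl : R := l * (l + 2) / 2.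
Definition cu : R := 5 * l * (l + 2).

Lemma gn_deriv x : -1 < x < 1 -> is_derive gn x (gd x).
Proof.
  intros Hx. unfold gn, gd.
  assert (E1 : forall a, Derive (fun t => Rpower t a) (x + 1) = a * Rpower (x+1) (a - 1)).
  { intros. apply is_derive_unique. apply is_derive_Rpow. lra. }
  assert (E2 : forall a, Derive (fun t => Rpower t a) (1 + - x) = a * Rpower (1 - x) (a - 1)).
  { intros. apply is_derive_unique. apply is_derive_Rpow. lra. }
  auto_derive.
  - repeat split; eexists; apply is_derive_Rpow; lra.
  - rewrite !E1, !E2.
    assert (e1 : l + 2 - 1 = l + 1) by ring. assert (e2 : l + 1 - 1 = l) by ring.
    assert (e3 : 1 + - x = 1 - x) by ring.
    rewrite e1, e2, e3. ring.
Qed.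

Lemma d0_pos : 0 < d0.
Proof. unfold d0. apply Rdiv_lt_0_compat; lra. Qed.
Lemma d0_small : d0 <= 1/8.
Proof. unfold d0. apply Rmult_le_reg_r with (4 * (l+1)); [lra|]. unfold Rdiv.
  rewrite Rmult_assoc, Rinv_l by lra. lra. Qed.

Lemma gd_bounds x : 0 <= x <= d0 -> cl <= gd x <= cu.
Proof.
  intros Hx. pose proof d0_small.
  assert (A1 : 1 <= Rpower (x + 1) (l + 1)) by (apply Rpower_ge1; lra).
  assert (A2 : Rpower (x + 1) (l + 1) <= (x+1)^2) by (apply Rpower_le_sq; lra).
  assert (A3 : Rpower (1 - x) (l + 1) <= 1) by (apply Rpower_le1; lra).
  assert (A4 : 0 < Rpower (1 - x) (l + 1)) by apply Rpower_pos.
  assert (B1 : 1 <= Rpower (x + 1) l) by (apply Rpower_ge1; lra).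
  assert (B2 : Rpower (x + 1) l <= x + 1) by (apply Rpower_le_id; lra).
  assert (B3 : Rpower (1 - x) l <= 1) by (apply Rpower_le1; lra).
  assert (B4 : 0 < Rpower (1 - x) l) by apply Rpower_pos.
  assert (Hxd : x * (4 * (l + 1)) <= l).
  { unfold d0 in Hx. destruct Hx as [_ Hx].
    apply Rmult_le_compat_r with (r := 4 * (l+1)) in Hx; [|lra].
    unfold Rdiv in Hx. rewrite Rmult_assoc, Rinv_l in Hx by lra. lra. }
  unfold gd, cl, cu. split.
  - set (P := Rpower (x + 1) (l + 1)) in *. set (P' := Rpower (1 - x) (l + 1)) in *.
    set (S := Rpower (x + 1) l) in *. set (S' := Rpower (1 - x) l) in *.
    assert (0 <= (l + 2) * (l + 1) * x * (S - S') <= (l+2) * (l+1) * x * 2).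
    { split. apply Rmult_le_pos; [|lra]. apply Rmult_le_pos; [|lra]. nra.
      apply Rmult_le_compat_l; [|lra]. apply Rmult_le_pos; [|lra]. nra. }
    assert ((l + 2) * l * 1 <= (l + 2) * l * (P + P')) by (apply Rmult_le_compat_l; nra).
    nra.
  - set (P := Rpower (x + 1) (l + 1)) in *. set (P' := Rpower (1 - x) (l + 1)) in *.
    set (S := Rpower (x + 1) l) in *. set (S' := Rpower (1 - x) l) in *.
    assert (0 <= (l + 2) * (l + 1) * x * (S - S')).
    { apply Rmult_le_pos; [|lra]. apply Rmult_le_pos; [|lra]. nra. }
    assert ((l + 2) * l * (P + P') <= (l + 2) * l * 5) by (apply Rmult_le_compat_l; nra).
    nra.
Qed.

Lemma gn0 : gn 0 = 0.
Proof. unfold gn. replace (0 + 1) with 1 by ring. replace (1 - 0) with 1 by ring.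
  rewrite !Rpower_1base. ring. Qed.

Lemma gn_bounds x : 0 <= x <= d0 -> cl * x <= gn x <= cu * x.
Proof.
  intros Hx. pose proof d0_small.
  destruct (mvt_bounds gn gd 0 x cl cu) as [H1 H2]; try lra.
  - intros y Hy. apply gn_deriv. lra.
  - intros y Hy. apply gd_bounds. lra.
  - rewrite gn0 in H1, H2. lra.
Qed.

Lemma cl_pos : 0 < cl.
Proof. unfold cl. apply Rdiv_lt_0_compat; nra. Qed.
Lemma cu_pos : 0 < cu.
Proof. unfold cu. nra. Qed.
Lemma rr_ge1 : 1 <= rr.
Proof. unfold rr. unfold Rdiv. rewrite Rmult_1_l. rewrite <- Rinv_1 at 1.
  apply Rinv_le_contravar; lra. Qed.
Lemma c0_pos : 0 < c0.
Proof. apply Rpower_pos. Qed.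

Lemma rpow_pos x a : 0 < x -> rpow x a = Rpower x a.
Proof. intros. unfold rpow. destruct (Rlt_dec 0 x); [auto|lra]. Qed.

Lemma F_eq x : 0 < x <= d0 -> F l x = c0 * Rpower (gn x) rr.
Proof.
  intros Hx. pose proof d0_small. pose proof cl_pos.
  assert (0 < gn x). { pose proof (gn_bounds x ltac:(lra)). nra. }
  unfold F, c0, rr. rewrite (rpow_pos (2 * l * (l + 1) * (l + 2) / 3)).
  2:{ apply Rdiv_lt_0_compat; nra. }
  f_equal.
  assert (E : (l + 1) * (rpow (x + 1) (l + 2) - rpow (Rabs (x - 1)) (l + 2)) -
     (l + 2) * x * (rpow (x + 1) (l + 1) - sgn (x - 1) * rpow (Rabs (x - 1)) (l + 1)) = gn x).
  { rewrite Rabs_left by lra. replace (- (x - 1)) with (1 - x) by ring.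
    unfold sgn. destruct (Rlt_dec 0 (x - 1)); [lra|]. destruct (Rlt_dec (x-1) 0); [|lra].
    rewrite !rpow_pos by lra. unfold gn. ring. }
  rewrite E. apply rpow_pos. auto.
Qed.

Lemma F_deriv x : 0 < x < d0 -> is_derive (F l) x (Fd x).
Proof.
  intros Hx. pose proof d0_small. pose proof cl_pos.
  apply is_derive_ext_loc with (f := fun t => c0 * Rpower (gn t) rr).
  { apply locally_interval with (a := Finite 0) (b := Finite d0); simpl; try lra.
    intros y H1 H2. symmetry. apply F_eq. lra. }
  assert (0 < gn x). { pose proof (gn_bounds x ltac:(lra)). nra. }
  unfold Fd.
  assert (E : Derive (fun t => Rpower t rr) (gn x) = rr * Rpower (gn x) (rr - 1)).
  { apply is_derive_unique. apply is_derive_Rpow. auto. }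
  assert (E2 : Derive gn x = gd x).
  { apply is_derive_unique. apply gn_deriv. lra. }
  auto_derive.
  - repeat split; eexists; first [apply gn_deriv; lra | apply is_derive_Rpow; auto].
  - change (Derive (fun x0 : R => gn x0) x) with (Derive gn x). rewrite E, E2. ring.
Qed.

Lemma F_bounds x : 0 < x <= d0 ->
  c0 * Rpower (cl * x) rr <= F l x <= c0 * Rpower (cu * x) rr /\
  0 <= x * Fd x <= rr * (c0 * Rpower (cu * x) rr).
Proof.
  intros Hx. pose proof d0_small. pose proof cl_pos. pose proof cu_pos. pose proof rr_ge1.
  pose proof c0_pos.
  destruct (gn_bounds x ltac:(lra)) as [G1 G2].
  destruct (gd_bounds x ltac:(lra)) as [D1 D2].
  assert (0 < cl * x) by nra.
  rewrite F_eq by lra. split; [split|split].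
  - apply Rmult_le_compat_l; [lra|]. apply Rle_Rpower_l; lra.
  - apply Rmult_le_compat_l; [lra|]. apply Rle_Rpower_l; lra.
  - unfold Fd. pose proof (Rpower_pos (gn x) (rr - 1)). apply Rmult_le_pos; [lra|].
    apply Rmult_le_pos; [lra|]. apply Rmult_le_pos; [|lra]. nra.
  - unfold Fd.
    assert (Q1 : Rpower (gn x) (rr - 1) <= Rpower (cu * x) (rr - 1)) by (apply Rle_Rpower_l; lra).
    assert (Q2 : Rpower (cu * x) rr = Rpower (cu * x) (rr - 1) * (cu * x)).
    { rewrite <- (Rpower_1 (cu * x)) at 3 by nra. rewrite <- Rpower_plus. f_equal; ring. }
    rewrite Q2. pose proof (Rpower_pos (gn x) (rr - 1)) as Q3.
    assert (Q4 : x * (c0 * (rr * Rpower (gn x) (rr - 1) * gd x))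
      = (c0 * rr * x) * (Rpower (gn x) (rr - 1) * gd x)) by ring.
    rewrite Q4.
    assert (Q5 : rr * (c0 * (Rpower (cu * x) (rr - 1) * (cu * x)))
      = (c0 * rr * x) * (Rpower (cu * x) (rr - 1) * cu)) by ring.
    rewrite Q5. apply Rmult_le_compat_l. apply Rmult_le_pos; [apply Rmult_le_pos|]; lra.
    apply Rmult_le_compat; lra.
Qed.

End Fsec.

Lemma Wmu_Ps j l m1 m2 m3 :
  Wmu j l m1 m2 m3 = 8 * j ^ 2 * Ps 1 m1 m2 m3 (F l m1) (F l m2) (F l m3).
Proof. unfold Wmu, Ps, Gam, gam. ring. Qed.

Lemma chain (f u1 u2 u3 : R -> R) s0 du1 du2 du3 fd1 fd2 fd3 c :
  is_derive u1 s0 du1 -> is_derive u2 s0 du2 -> is_derive u3 s0 du3 ->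
  is_derive f (u1 s0) fd1 -> is_derive f (u2 s0) fd2 -> is_derive f (u3 s0) fd3 ->
  is_derive (fun s => c * Ps 1 (u1 s) (u2 s) (u3 s) (f (u1 s)) (f (u2 s)) (f (u3 s))) s0
   (c * Psd 1 (u1 s0) (u2 s0) (u3 s0) (f (u1 s0)) (f (u2 s0)) (f (u3 s0))
        du1 du2 du3 (fd1 * du1) (fd2 * du2) (fd3 * du3)).
Proof.
  intros H1 H2 H3 F1 F2 F3.
  pose proof (is_derive_unique _ _ _ H1) as E1.
  pose proof (is_derive_unique _ _ _ H2) as E2.
  pose proof (is_derive_unique _ _ _ H3) as E3.
  pose proof (is_derive_unique _ _ _ F1) as G1.
  pose proof (is_derive_unique _ _ _ F2) as G2.
  pose proof (is_derive_unique _ _ _ F3) as G3.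
  unfold Ps, gam. cbv zeta.
  auto_derive.
  - repeat split; eexists; eassumption.
  - change (Derive (fun x => u1 x) s0) with (Derive u1 s0).
    change (Derive (fun x => u2 x) s0) with (Derive u2 s0).
    change (Derive (fun x => u3 x) s0) with (Derive u3 s0).
    change (Derive (fun x => f x) (u1 s0)) with (Derive f (u1 s0)).
    change (Derive (fun x => f x) (u2 s0)) with (Derive f (u2 s0)).
    change (Derive (fun x => f x) (u3 s0)) with (Derive f (u3 s0)).
    rewrite E1, E2, E3, G1, G2, G3.
    unfold Psd, dgam, gam. ring.
Qed.

Definition Qf (j t : R) : R := exp (2 / sqrt 3 * t) / (2 * j).
Definition mu1 j t x (y : R) := Qf j t * exp (4 / sqrt 6 * x).
Definition mu2 j t x y := Qf j t * exp (- (2 / sqrt 6) * x + sqrt 2 * y).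
Definition mu3 j t x y := Qf j t * exp (- (2 / sqrt 6) * x - sqrt 2 * y).
Definition a1 := 4 / sqrt 6.
Definition a2 := - (2 / sqrt 6).

Lemma W_mu j l t x y : W j l t x y = Wmu j l (mu1 j t x y) (mu2 j t x y) (mu3 j t x y).
Proof. reflexivity. Qed.

Definition GX j l t x y :=
  let m1 := mu1 j t x y in let m2 := mu2 j t x y in let m3 := mu3 j t x y in
  8 * j ^ 2 * Psd 1 m1 m2 m3 (F l m1) (F l m2) (F l m3) (m1 * a1) (m2 * a2) (m3 * a2)
    (Fd l m1 * (m1 * a1)) (Fd l m2 * (m2 * a2)) (Fd l m3 * (m3 * a2)).
Definition GY j l t x y :=
  let m1 := mu1 j t x y in let m2 := mu2 j t x y in let m3 := mu3 j t x y in
  8 * j ^ 2 * Psd 1 m1 m2 m3 (F l m1) (F l m2) (F l m3) (m1 * 0) (m2 * sqrt 2) (m3 * - sqrt 2)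
    (Fd l m1 * (m1 * 0)) (Fd l m2 * (m2 * sqrt 2)) (Fd l m3 * (m3 * - sqrt 2)).
Definition EE j l t x y :=
  let m1 := mu1 j t x y in let m2 := mu2 j t x y in let m3 := mu3 j t x y in
  8 * j ^ 2 * Psd 1 m1 m2 m3 (F l m1) (F l m2) (F l m3) m1 m2 m3
    (Fd l m1 * m1) (Fd l m2 * m2) (Fd l m3 * m3).

Lemma Ps_unscale Q f m1 m2 m3 g1 g2 g3 : Q <> 0 -> f <> 0 ->
  Ps 1 m1 m2 m3 g1 g2 g3 = Q^3 * f * Ps (Q*f) (m1/Q) (m2/Q) (m3/Q) (g1/f) (g2/f) (g3/f).
Proof.
  intros. rewrite <- Ps_scale. f_equal; field; auto.
Qed.

Lemma Psd_unscale Q f m1 m2 m3 g1 g2 g3 d1 d2 d3 k1 k2 k3 : Q <> 0 -> f <> 0 ->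
  Psd 1 m1 m2 m3 g1 g2 g3 d1 d2 d3 k1 k2 k3 =
  Q^3 * f * Psd (Q*f) (m1/Q) (m2/Q) (m3/Q) (g1/f) (g2/f) (g3/f) (d1/Q) (d2/Q) (d3/Q) (k1/f) (k2/f) (k3/f).
Proof.
  intros. rewrite <- Psd_scale. f_equal; field; auto.
Qed.

Lemma exp_le' a b : a <= b -> exp a <= exp b.
Proof. intros [H|H]; [left; apply exp_increasing; auto| subst; lra]. Qed.

Lemma ln_le' a b : 0 < a -> a <= b -> ln a <= ln b.
Proof. intros H [H1|H1]; [left; apply ln_increasing; auto| subst; lra]. Qed.

Lemma Rabs_le_inv_ a b : Rabs a <= b -> -b <= a /\ a <= b.
Proof. intros. split; [pose proof (Rabs_pos a); pose proof (Rle_abs (-a)); rewrite Rabs_Ropp in *; lra| pose proof (Rle_abs a); lra]. Qed.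

Lemma exp_bounds M e : Rabs e <= 4 * M -> / exp (4 * M) <= exp e <= exp (4 * M).
Proof.
  intros H. rewrite <- exp_Ropp. destruct (Rabs_le_inv_ e (4*M) H) as [Ha Hb]. split; apply exp_le'; lra.
Qed.

Lemma Rpower_le_base b a : 0 < b <= 1 -> 1 <= a -> Rpower b a <= b.
Proof.
  intros Hb Ha. unfold Rpower. rewrite <- (exp_ln b) at 2 by lra. apply exp_le'.
  assert (ln b <= 0) by (rewrite <- ln_1; apply ln_le'; lra). nra.
Qed.

Lemma sqrt6_ge2 : 2 <= sqrt 6.
Proof. pose proof (sqrt_sqrt 6 ltac:(lra)). pose proof (sqrt_pos 6). nra. Qed.
Lemma sqrt2_le2 : sqrt 2 <= 2.
Proof. pose proof (sqrt_sqrt 2 ltac:(lra)). pose proof (sqrt_pos 2). nra. Qed.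
Lemma sqrt2_pos : 0 < sqrt 2.
Proof. apply sqrt_lt_R0. lra. Qed.

Lemma a1_b : 0 < a1 <= 2.
Proof. unfold a1. pose proof sqrt6_ge2. split. apply Rdiv_lt_0_compat; lra.
  apply Rmult_le_reg_r with (sqrt 6); [lra|]. unfold Rdiv. rewrite Rmult_assoc, Rinv_l by lra. nra. Qed.
Lemma a2_b : Rabs a2 <= 2.
Proof. unfold a2. pose proof sqrt6_ge2. rewrite Rabs_Ropp. rewrite Rabs_pos_eq.
  apply Rmult_le_reg_r with (sqrt 6); [lra|]. unfold Rdiv. rewrite Rmult_assoc, Rinv_l by lra. nra.
  apply Rlt_le, Rdiv_lt_0_compat; lra. Qed.

Definition kap l K := Rpower (cu l * K * K / cl l) (rr l).
Definition flo l K Q := c0 l * Rpower (cl l * Q / K) (rr l).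

Lemma mu_facts l K Q m : 0 < l < 1 -> 1 <= K -> 0 < Q -> Q * K <= d0 l / 2 ->
  Q / K <= m <= Q * K ->
  0 < m < d0 l /\ 1 <= F l m / flo l K Q <= kap l K /\
  0 <= Fd l m * m / flo l K Q <= rr l * kap l K.
Proof.
  intros Hl HK HQ HQK Hm.
  pose proof (d0_pos l Hl). pose proof (cl_pos l Hl). pose proof (cu_pos l Hl).
  pose proof (c0_pos l). pose proof (rr_ge1 l Hl).
  assert (HQK' : 0 < Q / K) by (apply Rdiv_lt_0_compat; lra).
  assert (Hm0 : 0 < m < d0 l) by lra.
  assert (Hfl : 0 < flo l K Q) by (unfold flo; pose proof (Rpower_pos (cl l * Q / K) (rr l)); nra).
  destruct (F_bounds l Hl m ltac:(lra)) as [[F1 F2] [F3 F4]].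
  assert (Hlow : flo l K Q <= c0 l * Rpower (cl l * m) (rr l)).
  { unfold flo. apply Rmult_le_compat_l; [lra|]. apply Rle_Rpower_l; [lra|].
    split. unfold Rdiv. rewrite Rmult_assoc. apply Rmult_lt_0_compat; [lra|]. exact HQK'.
    unfold Rdiv. rewrite Rmult_assoc. apply Rmult_le_compat_l; lra. }
  assert (Hup : c0 l * Rpower (cu l * m) (rr l) <= flo l K Q * kap l K).
  { unfold flo, kap. rewrite Rmult_assoc, Rpower_mult_distr.
    2: { unfold Rdiv. rewrite Rmult_assoc. apply Rmult_lt_0_compat; [lra|]. exact HQK'. }
    2: { apply Rdiv_lt_0_compat; [|lra]. repeat apply Rmult_lt_0_compat; lra. }
    apply Rmult_le_compat_l; [lra|]. apply Rle_Rpower_l; [lra|].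
    split. apply Rmult_lt_0_compat; lra.
    replace (cl l * Q / K * (cu l * K * K / cl l)) with (cu l * (Q * K)) by (field; lra).
    apply Rmult_le_compat_l; lra. }
  split; [exact Hm0|split; split].
  - apply Rmult_le_reg_r with (flo l K Q); [lra|]. unfold Rdiv. rewrite Rmult_assoc, Rinv_l by lra. lra.
  - apply Rmult_le_reg_r with (flo l K Q); [lra|]. unfold Rdiv. rewrite Rmult_assoc, Rinv_l by lra. lra.
  - apply Rmult_le_reg_r with (flo l K Q); [lra|]. unfold Rdiv. rewrite Rmult_assoc, Rinv_l by lra.
    rewrite Rmult_comm. lra.
  - apply Rmult_le_reg_r with (flo l K Q); [lra|]. unfold Rdiv. rewrite Rmult_assoc, Rinv_l by lra.
    rewrite (Rmult_comm (Fd l m)).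
    assert (rr l * (c0 l * Rpower (cu l * m) (rr l)) <= rr l * (flo l K Q * kap l K))
      by (apply Rmult_le_compat_l; lra).
    lra.
Qed.

Lemma scal_arg a m Q B : Rabs a <= 2 -> 0 < Q -> 0 <= m / Q <= B -> Rabs (m * a / Q) <= 2 * B.
Proof.
  intros Ha HQ Hm. replace (m * a / Q) with (a * (m / Q)) by (field; lra).
  rewrite Rabs_mult, (Rabs_pos_eq (m / Q)) by lra.
  apply Rmult_le_compat; try lra. apply Rabs_pos.
Qed.

Lemma scal_arg2 a d m f B : Rabs a <= 2 -> 0 < f -> 0 <= d * m / f <= B ->
  Rabs (d * (m * a) / f) <= 2 * B.
Proof.
  intros Ha Hf Hm. replace (d * (m * a) / f) with (a * (d * m / f)) by (field; lra).
  rewrite Rabs_mult, (Rabs_pos_eq (d * m / f)) by lra.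
  apply Rmult_le_compat; try lra. apply Rabs_pos.
Qed.

Lemma grad_generic j Q f P D : 0 < Q <= 1 -> 0 < f -> Q * f <= 1 -> Rabs P <= D ->
  Rabs (8 * j ^ 2 * (Q ^ 3 * f * P)) <= 8 * j ^ 2 * Rabs D * Q.
Proof.
  intros HQ Hf Hqf HP.
  assert (E : Rabs (8 * j ^ 2 * (Q ^ 3 * f * P)) = 8 * j ^ 2 * (Q ^ 3 * f * Rabs P)).
  { rewrite !Rabs_mult. rewrite (Rabs_pos_eq 8) by lra. rewrite (Rabs_pos_eq (j^2)) by (apply pow2_ge_0).
    rewrite (Rabs_pos_eq (Q^3)) by (apply pow_le; lra). rewrite (Rabs_pos_eq f) by lra. ring. }
  rewrite E. rewrite (Rmult_assoc (8 * j ^ 2)). apply Rmult_le_compat_l; [pose proof (pow2_ge_0 j); lra|].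
  assert (Rabs P <= Rabs D) by (pose proof (Rle_abs D); lra).
  assert (Q ^ 3 * f <= Q).
  { replace (Q ^ 3 * f) with (Q * (Q * (Q * f))) by ring.
    assert (Q * (Q * f) <= 1) by nra. assert (0 <= Q * (Q * f)) by nra. nra. }
  rewrite (Rmult_comm (Rabs D)). apply Rmult_le_compat; try lra.
  apply Rmult_le_pos; [apply pow_le|]; lra. apply Rabs_pos.
Qed.

Lemma at_point j l M : 1 / 2 <= j -> 0 < l < 1 -> 0 <= M ->
  exists Q0 D0, 0 < Q0 <= 1 /\ forall t x y, Rabs x <= M -> Rabs y <= M -> Qf j t <= Q0 ->
   W j l t x y < 0 /\ EE j l t x y <= 0 /\
   Rabs (GX j l t x y) <= D0 * Qf j t /\ Rabs (GY j l t x y) <= D0 * Qf j t /\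
   0 < mu1 j t x y < d0 l /\ 0 < mu2 j t x y < d0 l /\ 0 < mu3 j t x y < d0 l.
Proof.
  intros Hj Hl HM.
  pose proof (d0_pos l Hl). pose proof (cl_pos l Hl). pose proof (cu_pos l Hl).
  pose proof (c0_pos l). pose proof (rr_ge1 l Hl).
  set (K := exp (4 * M)).
  assert (HK : 1 <= K) by (unfold K; rewrite <- exp_0; apply exp_le'; lra).
  assert (Hkap : 1 <= kap l K).
  { unfold kap. apply Rpower_ge1; [|lra].
    apply Rmult_le_reg_r with (cl l); [lra|]. unfold Rdiv. rewrite Rmult_assoc, Rinv_l by lra.
    unfold cu, cl. assert (1 <= K * K) by nra.
    assert (0 < l * (l + 2)) by nra. nra. }
  destruct (scaled_main K (kap l K) (rr l * kap l K) HK Hkap ltac:(nra)) as [eps0 [D0s [He0 Hmain]]].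
  set (Q0 := Rmin (Rmin 1 (d0 l / (2 * K))) (Rmin (K / cl l) (eps0 * K / (c0 l * cl l)))).
  assert (HQ0 : 0 < Q0).
  { unfold Q0. repeat apply Rmin_glb_lt; try lra; apply Rdiv_lt_0_compat; try nra;
    try (apply Rmult_lt_0_compat; lra). }
  exists Q0, (8 * j ^ 2 * Rabs D0s). split.
  { split; auto. unfold Q0. eapply Rle_trans; [apply Rmin_l|]. apply Rmin_l. }
  intros t x y Hx Hy HQ.
  set (Q := Qf j t) in *.
  assert (HQp : 0 < Q) by (unfold Q, Qf; apply Rdiv_lt_0_compat; [apply exp_pos|lra]).
  assert (HQ1 : Q <= 1) by (pose proof (Rmin_l (Rmin 1 (d0 l / (2 * K))) (Rmin (K / cl l) (eps0 * K / (c0 l * cl l)))); pose proof (Rmin_l 1 (d0 l / (2 * K))); unfold Q0 in HQ; lra).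
  assert (HQ2 : Q <= d0 l / (2 * K)) by (pose proof (Rmin_l (Rmin 1 (d0 l / (2 * K))) (Rmin (K / cl l) (eps0 * K / (c0 l * cl l)))); pose proof (Rmin_r 1 (d0 l / (2 * K))); unfold Q0 in HQ; lra).
  assert (HQ3 : Q <= K / cl l) by (pose proof (Rmin_r (Rmin 1 (d0 l / (2 * K))) (Rmin (K / cl l) (eps0 * K / (c0 l * cl l)))); pose proof (Rmin_l (K / cl l) (eps0 * K / (c0 l * cl l))); unfold Q0 in HQ; lra).
  assert (HQ4 : Q <= eps0 * K / (c0 l * cl l)) by (pose proof (Rmin_r (Rmin 1 (d0 l / (2 * K))) (Rmin (K / cl l) (eps0 * K / (c0 l * cl l)))); pose proof (Rmin_r (K / cl l) (eps0 * K / (c0 l * cl l))); unfold Q0 in HQ; lra).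
  assert (HQK : Q * K <= d0 l / 2).
  { apply Rmult_le_compat_r with (r := K) in HQ2; [|lra].
    replace (d0 l / (2 * K) * K) with (d0 l / 2) in HQ2 by (field; lra). lra. }
  pose proof a1_b as Ha1. pose proof a2_b as Ha2. pose proof sqrt2_le2. pose proof sqrt2_pos.
  assert (E1 : Rabs (4 / sqrt 6 * x) <= 4 * M).
  { fold a1. rewrite Rabs_mult, (Rabs_pos_eq a1) by lra. nra. }
  assert (E2 : Rabs (- (2 / sqrt 6) * x + sqrt 2 * y) <= 4 * M).
  { fold a2. eapply Rle_trans; [apply Rabs_triang|]. rewrite !Rabs_mult, (Rabs_pos_eq (sqrt 2)) by lra.
    pose proof (Rabs_pos x). pose proof (Rabs_pos y). pose proof (Rabs_pos a2). nra. }
  assert (E3 : Rabs (- (2 / sqrt 6) * x - sqrt 2 * y) <= 4 * M).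
  { fold a2. eapply Rle_trans; [apply Rabs_triang|]. rewrite Rabs_Ropp, !Rabs_mult, (Rabs_pos_eq (sqrt 2)) by lra.
    pose proof (Rabs_pos x). pose proof (Rabs_pos y). pose proof (Rabs_pos a2). nra. }
  apply exp_bounds in E1. apply exp_bounds in E2. apply exp_bounds in E3. fold K in E1, E2, E3.
  assert (Y : forall m ex, m = Q * exp ex -> / K <= exp ex <= K ->
     Q / K <= m <= Q * K /\ / K <= m / Q <= K).
  { intros m ex -> [Hl1 Hl2]. split; [split|].
    - unfold Rdiv. apply Rmult_le_compat_l; lra.
    - apply Rmult_le_compat_l; lra.
    - replace (Q * exp ex / Q) with (exp ex) by (field; lra). lra. }
  destruct (Y (mu1 j t x y) _ eq_refl E1) as [Y1 Y1'].
  destruct (Y (mu2 j t x y) _ eq_refl E2) as [Y2 Y2'].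
  destruct (Y (mu3 j t x y) _ eq_refl E3) as [Y3 Y3'].
  destruct (mu_facts l K Q _ Hl HK HQp HQK Y1) as [M1 [Z1 V1]].
  destruct (mu_facts l K Q _ Hl HK HQp HQK Y2) as [M2 [Z2 V2]].
  destruct (mu_facts l K Q _ Hl HK HQp HQK Y3) as [M3 [Z3 V3]].
  set (fl := flo l K Q) in *.
  assert (Hfl : 0 < fl) by (unfold fl, flo; pose proof (Rpower_pos (cl l * Q / K) (rr l)); nra).
  assert (Hfl2 : fl <= c0 l * (cl l * Q / K)).
  { unfold fl, flo. apply Rmult_le_compat_l; [lra|]. apply Rpower_le_base; [|lra].
    split. apply Rdiv_lt_0_compat; nra.
    apply Rmult_le_reg_r with K; [lra|]. unfold Rdiv. rewrite Rmult_assoc, Rinv_l by lra.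
    apply Rmult_le_compat_r with (r := cl l) in HQ3; [|lra].
    replace (K / cl l * cl l) with K in HQ3 by (field; lra). lra. }
  assert (He : 0 < Q * fl <= eps0).
  { split. nra.
    assert (Q * fl <= c0 l * cl l * Q / K).
    { apply Rle_trans with (Q * (c0 l * (cl l * Q / K))). apply Rmult_le_compat_l; lra.
      unfold Rdiv. replace (c0 l * cl l * Q * / K) with (1 * (c0 l * (cl l * Q * / K))) by ring.
      apply Rmult_le_compat_r; [|lra].
      apply Rmult_le_pos; [lra|]. apply Rmult_le_pos; [nra|]. left; apply Rinv_0_lt_compat; lra. }
    apply Rmult_le_compat_r with (r := c0 l * cl l / K) in HQ4.
    2: { apply Rdiv_le_0_compat; nra. }
    replace (eps0 * K / (c0 l * cl l) * (c0 l * cl l / K)) with eps0 in HQ4 by (field; repeat split; nra).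
    replace (Q * (c0 l * cl l / K)) with (c0 l * cl l * Q / K) in HQ4 by (field; lra). lra. }
  assert (Hqf1 : Q * fl <= 1) by lra.
  specialize (Hmain (Q * fl) _ _ _ _ _ _ _ _ _ He Y1' Y2' Y3' Z1 Z2 Z3 V1 V2 V3).
  destruct Hmain as [HP [HE HG]].
  assert (HKi : 0 < / K) by (apply Rinv_0_lt_compat; lra).
  assert (HQn : Q <> 0) by lra. assert (Hfn : fl <> 0) by lra.
  assert (Hj2 : 0 < 8 * j ^ 2) by nra.
  split; [|split; [|split; [|split]]].
  - rewrite W_mu, Wmu_Ps, (Ps_unscale Q fl) by auto.
    assert (0 < Q ^ 3 * fl) by (apply Rmult_lt_0_compat; [apply pow_lt|]; lra).
    assert (Q ^ 3 * fl * Ps (Q * fl) (mu1 j t x y / Q) (mu2 j t x y / Q) (mu3 j t x y / Q)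
      (F l (mu1 j t x y) / fl) (F l (mu2 j t x y) / fl) (F l (mu3 j t x y) / fl) < 0).
    { rewrite <- (Rmult_0_r (Q^3 * fl)). apply Rmult_lt_compat_l; auto. }
    nra.
  - unfold EE. cbv zeta. rewrite (Psd_unscale Q fl) by auto.
    assert (0 < Q ^ 3 * fl) by (apply Rmult_lt_0_compat; [apply pow_lt|]; lra).
    assert (Q ^ 3 * fl * Psd (Q * fl) (mu1 j t x y / Q) (mu2 j t x y / Q) (mu3 j t x y / Q)
      (F l (mu1 j t x y) / fl) (F l (mu2 j t x y) / fl) (F l (mu3 j t x y) / fl)
      (mu1 j t x y / Q) (mu2 j t x y / Q) (mu3 j t x y / Q)
      (Fd l (mu1 j t x y) * mu1 j t x y / fl) (Fd l (mu2 j t x y) * mu2 j t x y / fl)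
      (Fd l (mu3 j t x y) * mu3 j t x y / fl) <= 0).
    { rewrite <- (Rmult_0_r (Q^3 * fl)). apply Rmult_le_compat_l; lra. }
    nra.
  - unfold GX. cbv zeta. rewrite (Psd_unscale Q fl) by auto.
    apply grad_generic; try lra. apply HG.
    apply scal_arg. rewrite Rabs_pos_eq; lra. lra. lra.
    apply scal_arg. exact Ha2. lra. lra.
    apply scal_arg. exact Ha2. lra. lra.
    apply scal_arg2. rewrite Rabs_pos_eq; lra. lra. lra.
    apply scal_arg2. exact Ha2. lra. lra.
    apply scal_arg2. exact Ha2. lra. lra.
  - unfold GY. cbv zeta. rewrite (Psd_unscale Q fl) by auto.
    apply grad_generic; try lra. apply HG.
    apply scal_arg. rewrite Rabs_R0; lra. lra. lra.
    apply scal_arg. rewrite Rabs_pos_eq; lra. lra. lra.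
    apply scal_arg. rewrite Rabs_Ropp, Rabs_pos_eq; lra. lra. lra.
    apply scal_arg2. rewrite Rabs_R0; lra. lra. lra.
    apply scal_arg2. rewrite Rabs_pos_eq; lra. lra. lra.
    apply scal_arg2. rewrite Rabs_Ropp, Rabs_pos_eq; lra. lra. lra.
  - auto.
Qed.

Ltac genexp := repeat (match goal with |- context [exp ?e] => let u := fresh "u" in set (u := exp e) in * end).
Ltac rring := unfold Rdiv; ring.
Ltac rfield := field.

Lemma dWx j l t x y :
  0 < l < 1 ->
  0 < mu1 j t x y < d0 l -> 0 < mu2 j t x y < d0 l -> 0 < mu3 j t x y < d0 l ->
  is_derive (fun x => W j l t x y) x (GX j l t x y).
Proof.
  intros Hl H1 H2 H3.
  apply is_derive_ext with (f := fun s => 8 * j ^ 2 * Ps 1 (mu1 j t s y) (mu2 j t s y) (mu3 j t s y)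
     (F l (mu1 j t s y)) (F l (mu2 j t s y)) (F l (mu3 j t s y))).
  { intros s. rewrite W_mu, Wmu_Ps. reflexivity. }
  unfold GX. cbv zeta.
  apply (chain (F l) (fun s => mu1 j t s y) (fun s => mu2 j t s y) (fun s => mu3 j t s y)).
  - unfold mu1, a1. auto_derive; first [exact I | ring | auto].
  - unfold mu2, a2. auto_derive; first [exact I | ring | auto].
  - unfold mu3, a2, Rminus. auto_derive; first [exact I | ring | auto].
  - apply F_deriv; auto.
  - apply F_deriv; auto.
  - apply F_deriv; auto.
Qed.

Lemma dWy j l t x y :
  0 < l < 1 ->
  0 < mu1 j t x y < d0 l -> 0 < mu2 j t x y < d0 l -> 0 < mu3 j t x y < d0 l ->
  is_derive (fun y => W j l t x y) y (GY j l t x y).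
Proof.
  intros Hl H1 H2 H3.
  apply is_derive_ext with (f := fun s => 8 * j ^ 2 * Ps 1 (mu1 j t x s) (mu2 j t x s) (mu3 j t x s)
     (F l (mu1 j t x s)) (F l (mu2 j t x s)) (F l (mu3 j t x s))).
  { intros s. rewrite W_mu, Wmu_Ps. reflexivity. }
  unfold GY. cbv zeta.
  apply (chain (F l) (fun s => mu1 j t x s) (fun s => mu2 j t x s) (fun s => mu3 j t x s)).
  - unfold mu1. auto_derive; first [exact I | ring | auto].
  - unfold mu2. auto_derive; first [exact I | ring | auto].
  - unfold mu3, Rminus. auto_derive; first [exact I | ring | auto].
  - apply F_deriv; auto.
  - apply F_deriv; auto.
  - apply F_deriv; auto.
Qed.

Lemma dWt j l (qp qm : R -> R) t dqp dqm :
  0 < l < 1 ->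
  is_derive qp t dqp -> is_derive qm t dqm ->
  0 < mu1 j t (qp t) (qm t) < d0 l -> 0 < mu2 j t (qp t) (qm t) < d0 l -> 0 < mu3 j t (qp t) (qm t) < d0 l ->
  is_derive (fun s => W j l s (qp s) (qm s)) t
    (2 / sqrt 3 * EE j l t (qp t) (qm t) + GX j l t (qp t) (qm t) * dqp + GY j l t (qp t) (qm t) * dqm).
Proof.
  intros Hl Dp Dm H1 H2 H3.
  pose proof (is_derive_unique _ _ _ Dp) as Ep.
  pose proof (is_derive_unique _ _ _ Dm) as Em.
  apply is_derive_ext with (f := fun s => 8 * j ^ 2 * Ps 1 (mu1 j s (qp s) (qm s)) (mu2 j s (qp s) (qm s)) (mu3 j s (qp s) (qm s))
     (F l (mu1 j s (qp s) (qm s))) (F l (mu2 j s (qp s) (qm s))) (F l (mu3 j s (qp s) (qm s)))).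
  { intros s. rewrite W_mu, Wmu_Ps. reflexivity. }
  evar (D : R).
  replace (2 / sqrt 3 * EE j l t (qp t) (qm t) + GX j l t (qp t) (qm t) * dqp + GY j l t (qp t) (qm t) * dqm) with D.
  apply (chain (F l) (fun s => mu1 j s (qp s) (qm s)) (fun s => mu2 j s (qp s) (qm s)) (fun s => mu3 j s (qp s) (qm s))
    t (mu1 j t (qp t) (qm t) * (2 / sqrt 3 + a1 * dqp))
      (mu2 j t (qp t) (qm t) * (2 / sqrt 3 + a2 * dqp + sqrt 2 * dqm))
      (mu3 j t (qp t) (qm t) * (2 / sqrt 3 + a2 * dqp - sqrt 2 * dqm))).
  - unfold mu1, Qf, a1. auto_derive.
    + repeat split; auto; eexists; eauto.
    + change (Derive (fun x => qp x) t) with (Derive qp t). rewrite Ep. rring. 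
  - unfold mu2, Qf, a2. auto_derive.
    + repeat split; auto; eexists; eauto.
    + change (Derive (fun x => qp x) t) with (Derive qp t).
      change (Derive (fun x => qm x) t) with (Derive qm t). rewrite Ep, Em. rring.
  - unfold mu3, Qf, a2, Rminus. auto_derive.
    + repeat split; auto; eexists; eauto.
    + change (Derive (fun x => qp x) t) with (Derive qp t).
      change (Derive (fun x => qm x) t) with (Derive qm t). rewrite Ep, Em. rring.
  - apply F_deriv; auto.
  - apply F_deriv; auto.
  - apply F_deriv; auto.
  - unfold D. unfold EE, GX, GY. cbv zeta. unfold Psd, dgam, gam. ring.
Qed.

Lemma drift f df a b c bt : a <= b -> 0 < bt ->
  (forall x, a <= x <= b -> is_derive f x (df x)) ->
  (forall x, a <= x <= b -> Rabs (df x) <= c * exp (bt * x)) ->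
  Rabs (f a - f b) <= c / bt * exp (bt * b).
Proof.
  intros Hab Hbt Hd Hb.
  assert (Hc : 0 <= c).
  { pose proof (Hb a ltac:(lra)). pose proof (Rabs_pos (df a)). pose proof (exp_pos (bt * a)).
    destruct (Rle_or_lt 0 c); auto. nra. }
  assert (DE : forall x, is_derive (fun y => c / bt * exp (bt * y)) x (c * exp (bt * x))).
  { intros x. auto_derive; auto. field. lra. }
  assert (H1 : f a + c / bt * exp (bt * a) <= f b + c / bt * exp (bt * b)).
  { pose proof (mono_dec (fun y => - (f y + c / bt * exp (bt * y))) (fun y => - (df y + c * exp (bt * y))) a b Hab).
    simpl in H. assert (- (f b + c / bt * exp (bt * b)) <= - (f a + c / bt * exp (bt * a))); [|lra].
    apply H.
    - intros x Hx. pose proof (is_derive_unique _ _ _ (Hd x Hx)) as E.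
      auto_derive. first [eexists; exact (Hd x Hx) | split; [eexists; exact (Hd x Hx)|auto]].
      change (Derive (fun x => f x) x) with (Derive f x). rewrite E. field. lra.
    - intros x Hx. pose proof (Hb x Hx). pose proof (Rle_abs (- df x)). rewrite Rabs_Ropp in H1. lra. }
  assert (H2 : f b - c / bt * exp (bt * b) <= f a - c / bt * exp (bt * a)).
  { apply (mono_dec (fun y => f y - c / bt * exp (bt * y)) (fun y => df y - c * exp (bt * y)) a b Hab).
    - intros x Hx. pose proof (is_derive_unique _ _ _ (Hd x Hx)) as E.
      auto_derive. first [eexists; exact (Hd x Hx) | split; [eexists; exact (Hd x Hx)|auto]].
      change (Derive (fun x => f x) x) with (Derive f x). rewrite E. field. lra.
    - intros x Hx. pose proof (Hb x Hx). pose proof (Rle_abs (df x)). lra. }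
  assert (0 <= c / bt * exp (bt * a)).
  { apply Rmult_le_pos; [apply Rdiv_le_0_compat; lra| pose proof (exp_pos (bt * a)); lra]. }
  apply Rabs_le. lra.
Qed.

Lemma Qf_le j t : 1 / 2 <= j -> Qf j t <= exp (2 / sqrt 3 * t).
Proof.
  intros Hj. unfold Qf. pose proof (exp_pos (2 / sqrt 3 * t)).
  apply Rmult_le_reg_r with (2 * j); [lra|]. unfold Rdiv. rewrite Rmult_assoc, Rinv_l by lra. nra.
Qed.
Lemma Qf_pos j t : 1 / 2 <= j -> 0 < Qf j t.
Proof. intros. unfold Qf. apply Rdiv_lt_0_compat; [apply exp_pos|lra]. Qed.

Lemma abs_le_norm a b M : sqrt (a ^ 2 + b ^ 2) <= M -> Rabs a <= M.
Proof.
  intros H. eapply Rle_trans; [|exact H].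
  rewrite <- (sqrt_pow2 (Rabs a)) by apply Rabs_pos. rewrite pow2_abs.
  apply sqrt_le_1_alt. pose proof (pow2_ge_0 b). lra.
Qed.

Lemma hderiv (pp pm Wt : R -> R) t d1 d2 dw :
  is_derive pp t d1 -> is_derive pm t d2 -> is_derive Wt t dw ->
  is_derive (fun s => / 2 * (pp s ^ 2 + pm s ^ 2) + 2 * Wt s) t (pp t * d1 + pm t * d2 + 2 * dw).
Proof.
  intros H1 H2 H3.
  pose proof (is_derive_unique _ _ _ H1) as E1.
  pose proof (is_derive_unique _ _ _ H2) as E2.
  pose proof (is_derive_unique _ _ _ H3) as E3.
  auto_derive.
  - repeat split; eexists; eassumption.
  - change (Derive (fun x => pp x) t) with (Derive pp t).
    change (Derive (fun x => pm x) t) with (Derive pm t).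
    change (Derive (fun x => Wt x) t) with (Derive Wt t).
    rewrite E1, E2, E3. field.
Qed.

Lemma nuderiv (qp qm : R -> R) x a b c p1 p2 :
  is_derive qp x a -> is_derive qm x b ->
  is_derive (fun s => c * s - (p1 * qp s + p2 * qm s)) x (c - (p1 * a + p2 * b)).
Proof.
  intros H1 H2.
  pose proof (is_derive_unique _ _ _ H1) as E1.
  pose proof (is_derive_unique _ _ _ H2) as E2.
  auto_derive.
  - repeat split; eexists; eassumption.
  - change (Derive (fun x => qp x) x) with (Derive qp x).
    change (Derive (fun x => qm x) x) with (Derive qm x).
    rewrite E1, E2. ring.
Qed.

Lemma sq_le_of_abs d e : Rabs d <= e -> d ^ 2 <= e ^ 2.
Proof.
  intros H. rewrite <- pow2_abs. apply pow_incr. split; [apply Rabs_pos|auto].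
Qed.

Theorem proposition1 (n : nat) (l q01 : R)
  (qp qm pp pm : R -> R) :
  (1 <= n)%nat -> 0 < l < 1 ->
  let j := INR n / 2 in
  let h := fun t => / 2 * (pp t ^ 2 + pm t ^ 2) + 2 * W j l t (qp t) (qm t) in
  (forall t, t <= q01 -> 0 < h t) ->
  (forall t, t < q01 ->
     is_derive qp t (pp t / (2 * sqrt (h t))) /\
     is_derive qm t (pm t / (2 * sqrt (h t))) /\
     is_derive pp t (- (/ sqrt (h t)) * Derive (fun x => W j l t x (qm t)) (qp t)) /\
     is_derive pm t (- (/ sqrt (h t)) * Derive (fun y => W j l t (qp t) y) (qm t))) ->
  ~ (exists q02, q02 <= q01 /\
       exists M, forall t, t <= q02 -> sqrt (qp t ^ 2 + qm t ^ 2) <= M).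
Proof.
  intros Hn Hl j h Hh Hd [q02 [Hq02 [M HM]]].
  assert (Hj : 1 / 2 <= j).
  { unfold j. apply le_INR in Hn. simpl in Hn. lra. }
  assert (HM0 : 0 <= M) by (pose proof (HM q02 ltac:(lra)); pose proof (sqrt_pos (qp q02 ^ 2 + qm q02 ^ 2)); lra).
  assert (Hb : forall t, t <= q02 -> Rabs (qp t) <= M /\ Rabs (qm t) <= M).
  { intros t Ht. split; eapply abs_le_norm. apply HM; auto.
    rewrite Rplus_comm. apply HM; auto. }
  destruct (at_point j l M Hj Hl HM0) as [Q0 [D0 [HQ0 AP]]].
  set (bt := 2 / sqrt 3).
  assert (Hbt : 0 < bt) by (unfold bt; apply Rdiv_lt_0_compat; [lra| apply sqrt_lt_R0; lra]).
  set (T1 := Rmin (q02 - 1) (ln Q0 / bt)).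
  assert (HT1 : T1 <= q02 - 1) by apply Rmin_l.
  assert (HQt : forall t, t <= T1 -> Qf j t <= Q0).
  { intros t Ht. eapply Rle_trans; [apply Qf_le; auto|].
    rewrite <- (exp_ln Q0) by lra. apply exp_le'.
    assert (t <= ln Q0 / bt) by (pose proof (Rmin_r (q02 - 1) (ln Q0 / bt)); unfold T1 in Ht; lra).
    apply Rmult_le_compat_l with (r := bt) in H; [|lra].
    unfold Rdiv in H. rewrite (Rmult_comm (ln Q0)), <- Rmult_assoc, Rinv_r, Rmult_1_l in H by (apply Rgt_not_eq; exact Hbt). fold bt. lra. }
  assert (P : forall t, t <= T1 ->
     W j l t (qp t) (qm t) < 0 /\ EE j l t (qp t) (qm t) <= 0 /\
     Rabs (GX j l t (qp t) (qm t)) <= D0 * exp (bt * t) /\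
     Rabs (GY j l t (qp t) (qm t)) <= D0 * exp (bt * t) /\
     0 < mu1 j t (qp t) (qm t) < d0 l /\ 0 < mu2 j t (qp t) (qm t) < d0 l /\
     0 < mu3 j t (qp t) (qm t) < d0 l).
  { intros t Ht. destruct (Hb t ltac:(lra)) as [B1 B2].
    destruct (AP t (qp t) (qm t) B1 B2 (HQt t Ht)) as [A1 [A2 [A3 [A4 A5]]]].
    assert (HD0 : 0 <= D0).
    { pose proof (Qf_pos j t Hj). pose proof (Rabs_pos (GX j l t (qp t) (qm t))).
      destruct (Rle_or_lt 0 D0); auto. nra. }
    pose proof (Qf_le j t Hj). fold bt in H.
    repeat split; try tauto.
    - eapply Rle_trans; [exact A3|]. apply Rmult_le_compat_l; auto.
    - eapply Rle_trans; [exact A4|]. apply Rmult_le_compat_l; auto. }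
  assert (DH : forall t, t <= T1 ->
     is_derive qp t (pp t / (2 * sqrt (h t))) /\
     is_derive qm t (pm t / (2 * sqrt (h t))) /\
     is_derive pp t (- (/ sqrt (h t)) * GX j l t (qp t) (qm t)) /\
     is_derive pm t (- (/ sqrt (h t)) * GY j l t (qp t) (qm t)) /\
     is_derive h t (2 * bt * EE j l t (qp t) (qm t))).
  { intros t Ht. destruct (P t Ht) as [_ [_ [_ [_ [M1 [M2 M3]]]]]].
    destruct (Hd t ltac:(lra)) as [D1 [D2 [D3 D4]]].
    assert (EX : Derive (fun x => W j l t x (qm t)) (qp t) = GX j l t (qp t) (qm t))
      by (apply is_derive_unique; apply dWx; auto).
    assert (EY : Derive (fun y => W j l t (qp t) y) (qm t) = GY j l t (qp t) (qm t))
      by (apply is_derive_unique; apply dWy; auto).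
    rewrite EX in D3. rewrite EY in D4.
    do 4 (split; [assumption|]).
    pose proof (dWt j l qp qm t _ _ Hl D1 D2 M1 M2 M3) as DW.
    assert (Hht : 0 < h t) by (apply Hh; lra).
    assert (Hs : 0 < sqrt (h t)) by (apply sqrt_lt_R0; auto).
    pose proof (hderiv pp pm (fun s => W j l s (qp s) (qm s)) t _ _ _ D3 D4 DW) as HD.
    replace (2 * bt * EE j l t (qp t) (qm t)) with
      (pp t * (- / sqrt (h t) * GX j l t (qp t) (qm t)) + pm t * (- / sqrt (h t) * GY j l t (qp t) (qm t)) +
       2 * (2 / sqrt 3 * EE j l t (qp t) (qm t) + GX j l t (qp t) (qm t) * (pp t / (2 * sqrt (h t))) +
            GY j l t (qp t) (qm t) * (pm t / (2 * sqrt (h t))))).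
    { eapply is_derive_ext; [|exact HD]. intros s. reflexivity. }
    assert (0 < sqrt 3) by (apply sqrt_lt_R0; lra).
    unfold bt. field. split; apply Rgt_not_eq; lra. }
  assert (Hmono : forall a b, a <= b -> b <= T1 -> h b <= h a).
  { intros a b Hab HbT. apply (mono_dec h (fun x => 2 * bt * EE j l x (qp x) (qm x)) a b Hab).
    - intros x Hx. apply DH. lra.
    - intros x Hx. destruct (P x ltac:(lra)) as [_ [HE _]].
      assert (0 < 2 * bt) by lra.
      rewrite <- (Rmult_0_r (2 * bt)). apply Rmult_le_compat_l; lra. }
  assert (HhT1 : 0 < h T1) by (apply Hh; lra).
  set (s1 := sqrt (h T1)).
  assert (Hs1 : 0 < s1) by (apply sqrt_lt_R0; auto).
  assert (Hsq : forall t, t <= T1 -> s1 <= sqrt (h t)).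
  { intros t Ht. apply sqrt_le_1_alt. apply Hmono; lra. }
  assert (HD0 : 0 <= D0).
  { destruct (P T1 ltac:(lra)) as [_ [_ [G _]]]. pose proof (exp_pos (bt * T1)).
    pose proof (Rabs_pos (GX j l T1 (qp T1) (qm T1))).
    destruct (Rle_or_lt 0 D0); auto. nra. }
  assert (Hdb : forall x G, x <= T1 -> Rabs G <= D0 * exp (bt * x) ->
      Rabs (- / sqrt (h x) * G) <= D0 / s1 * exp (bt * x)).
  { intros x G Hx HG. pose proof (Hsq x Hx).
    assert (0 < sqrt (h x)) by lra.
    rewrite Rabs_mult, Rabs_Ropp, Rabs_inv, (Rabs_pos_eq (sqrt (h x))) by lra.
    replace (D0 / s1 * exp (bt * x)) with (/ s1 * (D0 * exp (bt * x))) by (field; lra).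
    apply Rmult_le_compat; auto. left; apply Rinv_0_lt_compat; auto. apply Rabs_pos.
    apply Rinv_le_contravar; auto. }
  set (T2 := Rmin T1 (ln (s1 ^ 2 * bt / (2 * (D0 + 1))) / bt)).
  assert (HT2 : T2 <= T1) by apply Rmin_l.
  assert (HeT2 : exp (bt * T2) <= s1 ^ 2 * bt / (2 * (D0 + 1))).
  { assert (0 < s1 ^ 2 * bt / (2 * (D0 + 1))).
    { apply Rdiv_lt_0_compat; [|lra]. apply Rmult_lt_0_compat; [apply pow_lt|]; lra. }
    rewrite <- (exp_ln (s1 ^ 2 * bt / (2 * (D0 + 1)))) by lra. apply exp_le'.
    assert (T2 <= ln (s1 ^ 2 * bt / (2 * (D0 + 1))) / bt) by apply Rmin_r.
    apply Rmult_le_compat_l with (r := bt) in H0; [|lra].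
    set (L := ln (s1 ^ 2 * bt / (2 * (D0 + 1)))) in *.
    replace (bt * (L / bt)) with L in H0 by (field; apply Rgt_not_eq; exact Hbt). lra. }
  set (eta := D0 / s1 / bt * exp (bt * T2)).
  assert (Heta0 : 0 <= eta).
  { unfold eta. apply Rmult_le_pos; [|left; apply exp_pos].
    unfold Rdiv. apply Rmult_le_pos; [apply Rmult_le_pos|]; auto; left; apply Rinv_0_lt_compat; auto. }
  assert (Heta : eta <= s1 / 2).
  { unfold eta. replace (D0 / s1 / bt * exp (bt * T2)) with ((D0 * exp (bt * T2)) * / (s1 * bt)) by (field; lra).
    apply Rle_trans with ((s1 ^ 2 * bt / 2) * / (s1 * bt)).
    - apply Rmult_le_compat_r. left; apply Rinv_0_lt_compat; nra.
      pose proof (exp_pos (bt * T2)).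
      apply Rle_trans with ((D0 + 1) * exp (bt * T2)). nra.
      apply Rmult_le_compat_l with (r := D0 + 1) in HeT2; [|lra].
      replace ((D0 + 1) * (s1 ^ 2 * bt / (2 * (D0 + 1)))) with (s1 ^ 2 * bt / 2) in HeT2 by (field; lra).
      lra.
    - right. field. lra. }
  assert (Hdrift : forall t, t <= T2 -> Rabs (pp t - pp T2) <= eta /\ Rabs (pm t - pm T2) <= eta).
  { intros t Ht. split.
    - apply (drift pp (fun x => - / sqrt (h x) * GX j l x (qp x) (qm x)) t T2 (D0 / s1) bt Ht Hbt).
      + intros x Hx. apply DH. lra.
      + intros x Hx. apply Hdb. lra. apply (P x ltac:(lra)).
    - apply (drift pm (fun x => - / sqrt (h x) * GY j l x (qp x) (qm x)) t T2 (D0 / s1) bt Ht Hbt).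
      + intros x Hx. apply DH. lra.
      + intros x Hx. apply Hdb. lra. apply (P x ltac:(lra)). }
  set (p1 := pp T2). set (p2 := pm T2). set (S := p1 ^ 2 + p2 ^ 2).
  assert (HS : 2 * s1 ^ 2 < S).
  { destruct (P T2 HT2) as [HW _].
    assert (Hm : h T1 <= h T2) by (apply Hmono; lra).
    assert (Hs : s1 ^ 2 = h T1) by (unfold s1; rewrite pow2_sqrt; lra).
    rewrite <- Hs in Hm. unfold h in Hm. fold p1 p2 in Hm. unfold S. lra. }
  assert (Heta2 : eta ^ 2 <= S / 8).
  { assert (eta ^ 2 <= (s1 / 2) ^ 2) by (apply pow_incr; lra). nra. }
  assert (HSp : 0 < S) by nra.
  set (c := S / (4 * sqrt (2 * S))).
  assert (Hs2S : 0 < sqrt (2 * S)) by (apply sqrt_lt_R0; lra).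
  assert (Hc : 0 < c) by (unfold c; apply Rdiv_lt_0_compat; lra).
  assert (Hnu : forall x, x <= T2 -> c <= p1 * (pp x / (2 * sqrt (h x))) + p2 * (pm x / (2 * sqrt (h x)))).
  { intros x Hx. destruct (Hdrift x Hx) as [Dr1 Dr2]. fold p1 p2 in Dr1, Dr2.
    destruct (P x ltac:(lra)) as [HW _].
    pose proof (Hsq x ltac:(lra)) as Hsx.
    assert (Hhx : 0 < h x) by (apply Hh; lra).
    set (d1 := pp x - p1) in *. set (d2 := pm x - p2) in *.
    assert (E1 : pp x = p1 + d1) by (unfold d1; ring).
    assert (E2 : pm x = p2 + d2) by (unfold d2; ring).
    assert (Q1 : d1 ^ 2 <= eta ^ 2) by (apply sq_le_of_abs; auto).
    assert (Q2 : d2 ^ 2 <= eta ^ 2) by (apply sq_le_of_abs; auto).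
    assert (Dot : S / 2 <= p1 * pp x + p2 * pm x).
    { rewrite E1, E2.
      assert (R1 : - (Rabs p1 * eta) <= p1 * d1).
      { pose proof (Rle_abs (- (p1 * d1))). rewrite Rabs_Ropp, Rabs_mult in H.
        assert (Rabs p1 * Rabs d1 <= Rabs p1 * eta) by (apply Rmult_le_compat_l; auto; apply Rabs_pos). lra. }
      assert (R2 : - (Rabs p2 * eta) <= p2 * d2).
      { pose proof (Rle_abs (- (p2 * d2))). rewrite Rabs_Ropp, Rabs_mult in H.
        assert (Rabs p2 * Rabs d2 <= Rabs p2 * eta) by (apply Rmult_le_compat_l; auto; apply Rabs_pos). lra. }
      assert (A1 : Rabs p1 ^ 2 = p1 ^ 2) by apply pow2_abs.
      assert (A2 : Rabs p2 ^ 2 = p2 ^ 2) by apply pow2_abs.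
      pose proof (Rabs_pos p1). pose proof (Rabs_pos p2).
      assert ((Rabs p1 + Rabs p2) * eta <= (Rabs p1 + Rabs p2) ^ 2 / 8 + 2 * eta ^ 2).
      { assert (0 <= ((Rabs p1 + Rabs p2) / 4 - eta) ^ 2) by apply pow2_ge_0. nra. }
      assert ((Rabs p1 + Rabs p2) ^ 2 <= 2 * S).
      { assert (0 <= (Rabs p1 - Rabs p2) ^ 2) by apply pow2_ge_0. unfold S. nra. }
      unfold S in *. nra. }
    assert (Hhb : h x <= 2 * S).
    { unfold h. rewrite E1, E2. unfold S.
      assert ((p1 + d1) ^ 2 <= 2 * p1 ^ 2 + 2 * d1 ^ 2) by (assert (0 <= (p1 - d1)^2) by apply pow2_ge_0; nra).
      assert ((p2 + d2) ^ 2 <= 2 * p2 ^ 2 + 2 * d2 ^ 2) by (assert (0 <= (p2 - d2)^2) by apply pow2_ge_0; nra).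
      pose proof (pow2_ge_0 p1). pose proof (pow2_ge_0 p2). unfold S in Heta2. replace (/ 2 * ((p1 + d1) ^ 2 + (p2 + d2) ^ 2)) with (((p1 + d1) ^ 2 + (p2 + d2) ^ 2) * (1/2)) by field. lra. }
    assert (Hsh : sqrt (h x) <= sqrt (2 * S)) by (apply sqrt_le_1_alt; auto).
    replace (p1 * (pp x / (2 * sqrt (h x))) + p2 * (pm x / (2 * sqrt (h x))))
      with ((p1 * pp x + p2 * pm x) * / (2 * sqrt (h x))) by (field; lra).
    unfold c. replace (S / (4 * sqrt (2 * S))) with ((S / 2) * / (2 * sqrt (2 * S))) by (field; lra).
    apply Rmult_le_compat; try lra. left; apply Rinv_0_lt_compat; lra.
    apply Rinv_le_contravar; lra. }
  set (N := (Rabs p1 + Rabs p2) * M).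
  assert (HN : forall x, x <= q02 -> Rabs (p1 * qp x + p2 * qm x) <= N).
  { intros x Hx. destruct (Hb x Hx) as [B1 B2].
    eapply Rle_trans; [apply Rabs_triang|]. rewrite !Rabs_mult. unfold N.
    pose proof (Rabs_pos p1). pose proof (Rabs_pos p2).
    assert (Rabs p1 * Rabs (qp x) <= Rabs p1 * M) by (apply Rmult_le_compat_l; auto).
    assert (Rabs p2 * Rabs (qm x) <= Rabs p2 * M) by (apply Rmult_le_compat_l; auto).
    lra. }
  assert (HN0 : 0 <= N) by (unfold N; pose proof (Rabs_pos p1); pose proof (Rabs_pos p2); nra).
  set (t0 := T2 - (2 * N + 1) / c).
  assert (Ht0 : t0 <= T2).
  { unfold t0. assert (0 < (2 * N + 1) / c) by (apply Rdiv_lt_0_compat; lra). lra. }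
  assert (G : c * T2 - (p1 * qp T2 + p2 * qm T2) <= c * t0 - (p1 * qp t0 + p2 * qm t0)).
  { apply (mono_dec (fun s => c * s - (p1 * qp s + p2 * qm s))
      (fun x => c - (p1 * (pp x / (2 * sqrt (h x))) + p2 * (pm x / (2 * sqrt (h x))))) t0 T2 Ht0).
    - intros x Hx. destruct (DH x ltac:(lra)) as [D1 [D2 _]]. apply nuderiv; auto.
    - intros x Hx. pose proof (Hnu x ltac:(lra)). lra. }
  assert (c * (T2 - t0) = 2 * N + 1) by (unfold t0; field; lra).
  pose proof (HN T2 ltac:(lra)). pose proof (HN t0 ltac:(lra)).
  apply Rabs_le_inv_ in H0. apply Rabs_le_inv_ in H1.
  lra.
Qed.
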